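(* Let $E$ be locally complete and let $G\subset E'$ be a linear subspace which determines boundedness. Let $(T^{E}_{m},T^{\mathbb{K}}_{m})_{m\in\mathcal{M}}$ be a defining family for $(\mathcal{FV},E)$ and a strong, consistent family for $(\mathcal{FW},E)$, where $\mathcal{FV}(\Omega)$ is a Banach space with $\mathcal{V}=(\nu_{1,1,m})_{m\in M_1}$ whose closed unit ball $B_{\mathcal{FV}(\Omega)}$ is a compact subset of $\mathcal{FW}(\Omega)$, and let $U$ be a set of uniqueness for $\mathcal{FV}(\Omega)$. Then the map \[ R_{U,G}\colon S\bigl(\{u\in\mathcal{FW}(\Omega)\varepsilon E\;|\;u(B_{\mathcal{FV}(\Omega)}^{\circ\mathcal{FW}(\Omega)'})\text{ is bounded in }E\}\bigr)\to\mathcal{FV}_G(U,E),\quad f\mapsto(T^E_m(f)(x))_{(m,x)\in U}, \] is surjective.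
   Context: $\mathbb{K}\in\{\mathbb{R},\mathbb{C}\}$; $E$ is a non-trivial locally convex Hausdorff space over $\mathbb{K}$ with a directed fundamental system of seminorms $(p_\alpha)_{\alpha\in\mathfrak{A}}$ (for $E=\mathbb{K}$: $\{|\cdot|\}$); $E'$ its dual. $E$ is locally complete if for every closed bounded absolutely convex $D\subset E$ the space $\bigcup_n nD$ normed by the gauge of $D$ is a Banach space. $G\subset E'$ determines boundedness if every $\sigma(E,G)$-bounded subset of $E$ is bounded. Weighted function spaces: given non-empty sets $\Omega,J,L$, non-empty sets $(M_l)_{l\in L}$ and a family $\mathcal{V}=((\nu_{j,l,m})_{m\in M_l})_{j\in J,l\in L}$ of functions $\nu_{j,l,m}\colon\Omega\to[0,\infty)$ such that for all $x\in\Omega$, $l\in L$ there is $j$ with $\nu_{j,l,m}(x)>0$ for all $m\in M_l$; $\mathcal{M}_{\mathrm{top}}:=\bigcup_lM_l$, sets $\mathcal{M}_0,\mathcal{M}_r$, the three pairwise disjoint, $\mathcal{M}$ their union; non-empty sets $(\omega_m)_{m\in\mathcal{M}}$ with $\Omega\subset\omega_m$ for $m\in\mathcal{M}_{\mathrm{top}}$; for $F\in\{E,\mathbb{K}\}$ linear maps $T^F_m\colon\operatorname{dom}T^F_m\subset F^\Omega\to F^{\omega_m}$. $\mathcal{FV}(\Omega,F)$ is the set of $f\in\bigcap_{m\in\mathcal{M}}\operatorname{dom}T^F_m\cap\bigcap_{m\in\mathcal{M}_0}\ker T^F_m$ with $|f|_{j,l,\alpha}:=\sup_{x\in\Omega,m\in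 M_l}p_\alpha(T^F_m(f)(x))\nu_{j,l,m}(x)<\infty$ for all $j,l,\alpha$, with these seminorms; $\mathcal{FV}(\Omega):=\mathcal{FV}(\Omega,\mathbb{K})$; $T^F_{m,x}(f):=T^F_m(f)(x)$. Such a space is a dom-space if its seminorms are directed and, in the scalar case, point evaluations $\delta_x$ are continuous. If $\mathcal{FV}(\Omega)$ and $\mathcal{FV}(\Omega,E)$ are dom-spaces built from the same data with operators $T^{\mathbb{K}}_m$ resp. $T^E_m$, $(T^E_m,T^{\mathbb{K}}_m)_{m\in\mathcal{M}}$ is called a defining family for $(\mathcal{FV},E)$. $\mathcal{FW}(\Omega)$, $\mathcal{FW}(\Omega,E)$ denote spaces of the same type built from the same $\Omega$, index set $\mathcal{M}$, sets $\omega_m$ and operators, but with another family of weights $\mathcal{W}$. $\mathcal{FW}(\Omega)\varepsilon E$ is the space of continuous linear maps $\mathcal{FW}(\Omega)'_\kappa\to E$ ($\kappa$: uniform convergence on absolutely convex compact sets), and $S(u)(x):=u(\delta_x)$. The family is consistent for $(\mathcal{FW},E)$ if for all $u\in\mathcal{FW}(\Omega)\varepsilon E$, $m\in\mathcal{M}$, $x\in\omega_m$: $S(u)\in\operatorname{dom}T^E_m$, $T^{\mathbb{K}}_{m,x}|_{\mathcal{FW}(\Omega)}\in\mathcal{FW}(\Omega)'$ and $T^E_m(S(u))(x)=u(T^{\mathbb{K}}_{m,x})$; strong for $(\mathcal{FW},E)$ if for all $e'\in E'$, $f\in\mathcal{FW}(\Omega,E)$, $m$: $e'\circ f\in\operatorname{dom}T^{\mathbb{K}}_m$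 and $T^{\mathbb{K}}_m(e'\circ f)=e'\circ T^E_m(f)$ on $\omega_m$. $B_{\mathcal{FV}(\Omega)}^{\circ\mathcal{FW}(\Omega)'}:=\{y'\in\mathcal{FW}(\Omega)': |y'(z)|\le1\ \forall z\in B_{\mathcal{FV}(\Omega)}\}$. $U\subset\bigcup_m\{m\}\times\omega_m$ is a set of uniqueness for $\mathcal{FV}(\Omega)$ if $T^{\mathbb{K}}_{m,x}\in\mathcal{FV}(\Omega)'$ for $(m,x)\in U$ and $f\in\mathcal{FV}(\Omega)$ with $T^{\mathbb{K}}_m(f)(x)=0$ for all $(m,x)\in U$ is $0$. $\mathcal{FV}_G(U,E)$ is the set of $f\colon U\to E$ such that for each $e'\in G$ there is $f_{e'}\in\mathcal{FV}(\Omega)$ with $T^{\mathbb{K}}_m(f_{e'})(x)=e'(f(m,x))$ for all $(m,x)\in U$. Under the hypotheses the map $R_{U,G}$ takes values in $\mathcal{FV}_G(U,E)$. *)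

(* Defs.v *)
From mathcomp Require Import all_boot all_order all_algebra.
From mathcomp Require Import reals complex.
From Stdlib Require List.
Set Implicit Arguments.
Unset Strict Implicit.
Unset Printing Implicit Defensive.
Import Order.TTheory GRing.Theory Num.Theory.
Local Open Scope ring_scope.

Section LCS.
Variables (K : numFieldType) (V : lmodType K).

Definition is_seminorm (q : V -> K) : Prop :=
  [/\ forall x, 0 <= q x,
      forall (a : K) x, q (a *: x) = `|a| * q x
    & forall x y, q (x + y) <= q x + q y].

(** (p_a)_{a in A} is a directed fundamental system of seminorms of a
    non-trivial locally convex Hausdorff space *)
Definition nontrivial_lc_hausdorff (A : Type) (p : A -> V -> K) : Prop :=
  [/\ inhabited A,
      forall a, is_seminorm (p a),
      (forall a b, exists c (C : K), 0 < C /\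
          forall x, p a x <= C * p c x /\ p b x <= C * p c x),
      (forall x, (forall a, p a x = 0) -> x = 0)
    & exists x : V, x <> 0].

Variables (A : Type) (p : A -> V -> K).

Definition lc_closed (D : V -> Prop) : Prop :=
  forall x, (forall a (eps : K), 0 < eps -> exists d, D d /\ p a (x - d) < eps) -> D x.

Definition lc_bounded (B : V -> Prop) : Prop :=
  forall a, exists C : K, forall x, B x -> p a x <= C.

Definition abs_convex (D : V -> Prop) : Prop :=
  forall x y (a b : K), D x -> D y -> `|a| + `|b| <= 1 -> D (a *: x + b *: y).

Definition in_dil (D : V -> Prop) (t : K) (y : V) : Prop :=
  exists d, D d /\ y = t *: d.

(** E_D = \bigcup_n nD with the gauge of D is a Banach space, written out:
    every gauge-Cauchy sequence of E_D gauge-converges in E_D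
    (gauge(y) <= eps  <->  y \in eps D  for eps > 0, D absolutely convex). *)
Definition gauge_complete (D : V -> Prop) : Prop :=
  forall x : nat -> V,
    (forall n, exists k : nat, in_dil D k%:R (x n)) ->
    (forall eps : K, 0 < eps -> exists N, forall n m, (N <= n)%N -> (N <= m)%N ->
        in_dil D eps (x n - x m)) ->
    exists y, (exists k : nat, in_dil D k%:R y) /\
      forall eps : K, 0 < eps -> exists N, forall n, (N <= n)%N -> in_dil D eps (x n - y).

Definition locally_complete : Prop :=
  forall D, lc_closed D -> lc_bounded D -> abs_convex D -> gauge_complete D.

Definition lin_on (P : V -> Prop) (f : V -> K) : Prop :=
  forall (a : K) x y, P x -> P y -> f (a *: x + y) = a * f x + f y.

Definition in_dual (e' : V -> K) : Prop :=
  lin_on (fun _ => True) e' /\ exists a (C : K), forall x, `|e' x| <= C * p a x.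

Definition lin_subspace_of_dual (G : (V -> K) -> Prop) : Prop :=
  [/\ forall g, G g -> in_dual g,
      G (fun _ => 0)
    & forall (a : K) g h, G g -> G h -> G (fun x => a * g x + h x)].

Definition determines_boundedness (G : (V -> K) -> Prop) : Prop :=
  forall B : V -> Prop,
    (forall g, G g -> exists C : K, forall x, B x -> `|g x| <= C) -> lc_bounded B.

End LCS.

Section Weighted.
Variables (K : numFieldType) (Omega X MM : Type) (emb : Omega -> X).
Variables (omega : MM -> X -> Prop).
Variables (F : lmodType K) (B : Type) (q : B -> F -> K).
Variables (dom : MM -> (Omega -> F) -> Prop) (T : MM -> (Omega -> F) -> X -> F).
Variables (M0 : MM -> Prop).
Variables (J L : Type) (Ml : L -> MM -> Prop) (nu : J -> L -> MM -> Omega -> K).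

Definition sn_le (f : Omega -> F) (j : J) (l : L) (b : B) (c : K) : Prop :=
  forall x m, Ml l m -> q b (T m f (emb x)) * nu j l m x <= c.

Definition FVspace (f : Omega -> F) : Prop :=
  [/\ forall m, dom m f,
      forall m, M0 m -> forall y, omega m y -> T m f y = 0
    & forall j l b, exists c, sn_le f j l b c].

Definition sn_directed : Prop :=
  forall j1 l1 b1 j2 l2 b2, exists j l b (C : K), 0 < C /\
    forall f, FVspace f -> forall c, sn_le f j l b c ->
      sn_le f j1 l1 b1 (C * c) /\ sn_le f j2 l2 b2 (C * c).

End Weighted.

Definition linear_family (K : numFieldType) (Omega X MM : Type)
  (omega : MM -> X -> Prop) (F : lmodType K)
  (dom : MM -> (Omega -> F) -> Prop) (T : MM -> (Omega -> F) -> X -> F) : Prop :=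
  forall m, dom m (fun _ => 0) /\
    forall (a : K) f g, dom m f -> dom m g ->
      dom m (fun w => a *: f w + g w) /\
      forall y, omega m y -> T m (fun w => a *: f w + g w) y = a *: T m f y + T m g y.

(** scalar-valued specialisation: F = K, single seminorm |.| *)
Definition absK (K : numFieldType) (_ : unit) (y : K^o) : K := `|(y : K)|.

Section Scalar.
Variables (K : numFieldType) (Omega X MM : Type) (emb : Omega -> X).
Variables (omega : MM -> X -> Prop).
Variables (dom : MM -> (Omega -> K^o) -> Prop) (T : MM -> (Omega -> K^o) -> X -> K^o).
Variables (M0 : MM -> Prop).
Variables (J L : Type) (Ml : L -> MM -> Prop) (nu : J -> L -> MM -> Omega -> K).

Definition FVs := FVspace emb omega (absK (K:=K)) dom T M0 Ml nu.
Definition sns (f : Omega -> K^o) j l c := sn_le emb (absK (K:=K)) T Ml nu f j l tt c.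

Definition scalar_dom_space : Prop :=
  sn_directed emb omega (absK (K:=K)) dom T M0 Ml nu /\
  forall x : Omega, exists j l (C : K),
    forall f, FVs f -> forall c, sns f j l c -> `|(f x : K)| <= C * c.

(** y' \in FV(Omega)' (functionals are total maps, only their values on
    FV(Omega) matter) *)
Definition sdual (y : (Omega -> K^o) -> K) : Prop :=
  (forall (a : K) f g, FVs f -> FVs g -> y (fun w => a *: f w + g w) = a * y f + y g) /\
  exists j l (C : K), forall f, FVs f -> forall c, sns f j l c -> `|y f| <= C * c.

(** open subsets of FV(Omega) for its locally convex topology
    (basic neighbourhoods by one seminorm suffice since it is directed) *)
Definition s_open (O : (Omega -> K^o) -> Prop) : Prop :=
  forall f, O f -> FVs f /\ exists j l (eps : K), 0 < eps /\
    forall g, FVs g -> (exists c, c < eps /\ sns (fun w => g w - f w) j l c) -> O g.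

Definition s_compact (C : (Omega -> K^o) -> Prop) : Prop :=
  (forall f, C f -> FVs f) /\
  forall (I : Type) (O : I -> (Omega -> K^o) -> Prop),
    (forall i, s_open (O i)) -> (forall f, C f -> exists i, O i f) ->
    exists s : seq I, forall f, C f -> exists2 i, List.In i s & O i f.

Definition s_abs_convex (C : (Omega -> K^o) -> Prop) : Prop :=
  forall f g (a b : K), C f -> C g -> `|a| + `|b| <= 1 ->
    C (fun w => a *: f w + b *: g w).

End Scalar.

(** The epsilon-product FW(Omega) eps E = L(FW(Omega)'_kappa, E):
    u is well defined on FW(Omega)' (depends only on restrictions to FW(Omega)),
    linear, and continuous for the topology of uniform convergence on
    absolutely convex compact subsets of FW(Omega). *)
Definition eps_prod (K : numFieldType) (V : lmodType K) (A : Type) (p : A -> V -> K)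
  (Omega X MM : Type) (emb : Omega -> X) (omega : MM -> X -> Prop)
  (dom : MM -> (Omega -> K^o) -> Prop) (T : MM -> (Omega -> K^o) -> X -> K^o)
  (M0 : MM -> Prop) (J L : Type) (Ml : L -> MM -> Prop) (nu : J -> L -> MM -> Omega -> K)
  (u : ((Omega -> K^o) -> K) -> V) : Prop :=
  let FW := FVs emb omega dom T M0 Ml nu in
  let FW' := sdual emb omega dom T M0 Ml nu in
  [/\ (forall y z, FW' y -> FW' z -> (forall f, FW f -> y f = z f) -> u y = u z),
      (forall (a : K) y z, FW' y -> FW' z -> u (fun f => a * y f + z f) = a *: u y + u z)
    & forall a, exists (Cp : (Omega -> K^o) -> Prop) (C : K),
        [/\ s_compact emb omega dom T M0 Ml nu Cp, s_abs_convex Cp &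
          forall y, FW' y -> forall c, (forall f, Cp f -> `|y f| <= c) -> p a (u y) <= C * c]].

Definition Smap (K : numFieldType) (V : lmodType K) (Omega : Type)
  (u : ((Omega -> K^o) -> K) -> V) : Omega -> V := fun w => u (fun f => f w).

Definition thm3p19_stmt (K : numFieldType) : Prop :=
  forall (V : lmodType K) (A : Type) (p : A -> V -> K)
    (G : (V -> K) -> Prop)
    (Omega X MM : Type) (emb : Omega -> X) (omega : MM -> X -> Prop)
    (M0 Mr : MM -> Prop)
    (domE : MM -> (Omega -> V) -> Prop) (TE : MM -> (Omega -> V) -> X -> V)
    (domK : MM -> (Omega -> K^o) -> Prop) (TK : MM -> (Omega -> K^o) -> X -> K^o)
    (nu : MM -> Omega -> K)
    (JW LW : Type) (MlW : LW -> MM -> Prop) (nuW : JW -> LW -> MM -> Omega -> K)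
    (U : MM -> X -> Prop),
  let Mtop := fun m => ~ M0 m /\ ~ Mr m in
  (* V = (nu_{1,1,m})_{m in M_1}: J = L = {1}, M_1 = M_top *)
  let MlV := fun (_ : unit) m => Mtop m in
  let nuV := fun (_ : unit) (_ : unit) m x => nu m x in
  let FV := FVs emb omega domK TK M0 MlV nuV in
  let FVE := FVspace emb omega p domE TE M0 MlV nuV in
  let FW := FVs emb omega domK TK M0 MlW nuW in
  let FWE := FVspace emb omega p domE TE M0 MlW nuW in
  let FW' := sdual emb omega domK TK M0 MlW nuW in
  let normV := fun f c => sns emb TK MlV nuV f tt tt c in
  let BFV := fun f => FV f /\ normV f 1 in
  let Bpolar := fun y => FW' y /\ forall f, BFV f -> `|y f| <= 1 in
  let epsE := eps_prod p emb omega domK TK M0 MlW nuW in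
  nontrivial_lc_hausdorff p -> locally_complete p ->
  lin_subspace_of_dual p G -> determines_boundedness p G ->
  (forall m, ~ (M0 m /\ Mr m)) ->
  (forall m, Mtop m -> forall x, omega m (emb x)) -> injective emb ->
  inhabited Omega ->
  (exists m, Mtop m) ->
  (forall m x, Mtop m -> 0 <= nu m x) ->
  (forall x m, Mtop m -> 0 < nu m x) ->
  inhabited JW -> inhabited LW ->
  (forall l, exists m, MlW l m) ->
  (forall m, Mtop m <-> exists l, MlW l m) ->
  (forall j l m x, 0 <= nuW j l m x) ->
  (forall x l, exists j, forall m, MlW l m -> 0 < nuW j l m x) ->
  linear_family omega domE TE -> linear_family omega domK TK ->
  (* defining family for (FV,E): FV(Omega), FV(Omega,E) are dom-spaces *)
  scalar_dom_space emb omega domK TK M0 MlV nuV ->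
  sn_directed emb omega p domE TE M0 MlV nuV ->
  (* FW(Omega) is a dom-space (needed for S to be defined) *)
  scalar_dom_space emb omega domK TK M0 MlW nuW ->
  (* strong for (FW,E) *)
  (forall e', in_dual p e' -> forall f, FWE f -> forall m,
      domK m (fun w => e' (f w)) /\
      forall y, omega m y -> TK m (fun w => e' (f w)) y = e' (TE m f y)) ->
  (* consistent for (FW,E) *)
  (forall u, epsE u -> forall m y, omega m y ->
      [/\ domE m (Smap u), FW' (fun f => TK m f y) &
          TE m (Smap u) y = u (fun f => TK m f y)]) ->
  (* FV(Omega) is a Banach space *)
  (forall s : nat -> Omega -> K^o, (forall n, FV (s n)) ->
     (forall eps : K, 0 < eps -> exists N, forall n k, (N <= n)%N -> (N <= k)%N ->
         normV (fun w => s n w - s k w) eps) ->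
     exists f, FV f /\ forall eps : K, 0 < eps -> exists N, forall n, (N <= n)%N ->
         normV (fun w => s n w - f w) eps) ->
  s_compact emb omega domK TK M0 MlW nuW BFV ->
  (* U is a set of uniqueness for FV(Omega) *)
  (forall m y, U m y -> omega m y) ->
  (forall m y, U m y -> sdual emb omega domK TK M0 MlV nuV (fun f => TK m f y)) ->
  (forall f, FV f -> (forall m y, U m y -> TK m f y = 0) -> forall w, f w = 0) ->
  forall g : MM -> X -> V,
    (forall e', G e' -> exists fe, FV fe /\ forall m y, U m y -> TK m fe y = e' (g m y)) ->
    exists u, [/\ epsE u,
      lc_bounded p (fun e => exists y, Bpolar y /\ e = u y) &
      forall m y, U m y -> TE m (Smap u) y = g m y].

(* Main.v *)
Require Import Defs.
From mathcomp Require Import all_boot all_order all_algebra.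
From mathcomp Require Import reals complex.
From mathcomp Require Import boolp ring lra.
From Stdlib Require List.
Set Implicit Arguments. Unset Strict Implicit. Unset Printing Implicit Defensive.
Import Order.TTheory GRing.Theory Num.Theory.
Local Open Scope ring_scope.


Section Lin.
Variables (K : numFieldType) (Omega X MM : Type) (emb : Omega -> X).
Variables (omega : MM -> X -> Prop) (M0 : MM -> Prop).
Variables (domK : MM -> (Omega -> K^o) -> Prop) (TK : MM -> (Omega -> K^o) -> X -> K^o).
Hypothesis hlin : linear_family omega domK TK.

Lemma dom0 m : domK m (fun _ => 0). Proof. exact: (hlin m).1. Qed.

Lemma T0 m y : omega m y -> TK m (fun _ => 0) y = 0.
Proof.
move=> hy; have := ((hlin m).2 1 _ _ (dom0 m) (dom0 m)).2 y hy.
have -> : (fun w : Omega => 1 *: (0 : K^o) + 0) = (fun _ => 0).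
  by apply: funext => w; rewrite scaler0 addr0.
rewrite scale1r => E; apply: (@addrI _ (TK m (fun _ => 0) y)).
by rewrite addr0 -E.
Qed.

Lemma dom2 m a b f g : domK m f -> domK m g -> domK m (fun w => a *: f w + b *: g w).
Proof.
move=> hf hg.
have hbg : domK m (fun w => b *: g w + 0).
  exact: ((hlin m).2 b _ _ hg (dom0 m)).1.
have -> : (fun w => a *: f w + b *: g w) = (fun w => a *: f w + (b *: g w + 0)).
  by apply: funext => w; rewrite addr0.
exact: ((hlin m).2 a _ _ hf hbg).1.
Qed.

Lemma T2 m a b f g y : domK m f -> domK m g -> omega m y ->
  TK m (fun w => a *: f w + b *: g w) y = a *: TK m f y + b *: TK m g y.
Proof.
move=> hf hg hy.
have hbg : domK m (fun w => b *: g w + 0).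
  exact: ((hlin m).2 b _ _ hg (dom0 m)).1.
have -> : (fun w => a *: f w + b *: g w) = (fun w => a *: f w + (b *: g w + 0)).
  by apply: funext => w; rewrite addr0.
rewrite (((hlin m).2 a _ _ hf hbg).2 y hy); congr (_ + _).
by rewrite ((hlin m).2 b _ _ hg (dom0 m)).2 // T0 // addr0.
Qed.

Lemma TZ m a f y : domK m f -> omega m y -> TK m (fun w => a *: f w) y = a *: TK m f y.
Proof.
move=> hf hy; have := T2 a 0 hf (dom0 m) hy.
have -> : (fun w => a *: f w + 0 *: (0 : K^o)) = (fun w => a *: f w).
  by apply: funext => w; rewrite scaler0 addr0.
by rewrite scale0r addr0.
Qed.

Section Gen.
Variables (J L : Type) (Ml : L -> MM -> Prop) (nu : J -> L -> MM -> Omega -> K).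
Hypothesis hnu : forall j l m x, Ml l m -> 0 <= nu j l m x.
Hypothesis hom : forall l m x, Ml l m -> omega m (emb x).

Local Notation FVg := (FVs emb omega domK TK M0 Ml nu).
Local Notation sdg := (sdual emb omega domK TK M0 Ml nu).
Local Notation snsg := (sns emb TK Ml nu).

Lemma FVs0 : FVg (fun _ => 0).
Proof.
split; first by move=> m; exact: dom0.
  by move=> m _ y hy; rewrite T0.
move=> j l b; exists 0 => x m hm; rewrite /absK T0; last exact: (hom _ hm).
by rewrite normr0 mul0r.
Qed.

Lemma sns2 a b f g j l cf cg : (forall m, domK m f) -> (forall m, domK m g) ->
  snsg f j l cf -> snsg g j l cg -> snsg (fun w => a *: f w + b *: g w) j l (`|a| * cf + `|b| * cg).
Proof.
move=> df dg hcf hcg x m hm.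

have hx := hom x hm.
rewrite /absK T2 //.
apply: le_trans (_ : (`|a| * (`|(TK m f (emb x) : K)| * nu j l m x) +
   `|b| * (`|(TK m g (emb x) : K)| * nu j l m x)) <= _); last first.
  by apply: lerD; apply: ler_wpM2l => //; [exact: hcf | exact: hcg].
rewrite mulrA mulrA -mulrDl; apply: ler_wpM2r; first exact: hnu.
apply: le_trans (ler_normD _ _) _.
by rewrite /GRing.scale /= !normrM.
Qed.

Lemma FVs2 a b f g : FVg f -> FVg g -> FVg (fun w => a *: f w + b *: g w).
Proof.
case=> df zf bf [dg zg bg]; split.
- by move=> m; apply: dom2.
- by move=> m hm y hy; rewrite T2 // zf // zg // !scaler0 addr0.
move=> j l c; case: (bf j l c) => cf hcf; case: (bg j l c) => cg hcg.
exists (`|a| * cf + `|b| * cg); case: c hcf hcg => hcf hcg.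
exact: sns2.
Qed.



Lemma FVs_ext f g : (forall w, f w = g w) -> FVg f -> FVg g.
Proof. by move=> e; have -> : f = g by apply: funext. Qed.

Lemma FVsZ a f : FVg f -> FVg (fun w => a *: f w).
Proof.
move=> hf; apply: FVs_ext (FVs2 a 0 hf FVs0).
by move=> w; rewrite scaler0 addr0.
Qed.

Lemma sd0 y : sdg y -> y (fun _ => 0) = 0.
Proof.
case=> hl _; have := hl (-1) _ _ FVs0 FVs0.
have -> : (fun w : Omega => (-1) *: (0 : K^o) + 0) = (fun _ => 0).
  by apply: funext => w; rewrite scaler0 addr0.
by rewrite mulN1r addNr.
Qed.

Lemma sdZ y a f : sdg y -> FVg f -> y (fun w => a *: f w) = a * y f.
Proof.
move=> hy hf; have := hy.1 a _ _ hf FVs0.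
have -> : (fun w => a *: f w + 0) = (fun w => a *: f w).
  by apply: funext => w; rewrite addr0.
by rewrite sd0 // addr0.
Qed.

Lemma sd2 y a b f g : sdg y -> FVg f -> FVg g ->
  y (fun w => a *: f w + b *: g w) = a * y f + b * y g.
Proof.
move=> hy hf hg; have := hy.1 a _ (fun w => b *: g w) hf (FVsZ b hg).
by rewrite /= => ->; rewrite sdZ.
Qed.

Lemma sdB y f g : sdg y -> FVg f -> FVg g -> y (fun w => f w - g w) = y f - y g.
Proof.
move=> hy hf hg; have := sd2 1 (-1) hy hf hg.
have -> : (fun w => 1 *: f w + (-1) *: g w) = (fun w => f w - g w).
  by apply: funext => w; rewrite scale1r scaleN1r.
by rewrite mul1r mulN1r.
Qed.

Lemma FVsB f g : FVg f -> FVg g -> FVg (fun w => f w - g w).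
Proof.
move=> hf hg; apply: FVs_ext (FVs2 1 (-1) hf hg).
by move=> w; rewrite scale1r scaleN1r.
Qed.

Hypothesis hdir : sn_directed emb omega (absK (K:=K)) domK TK M0 Ml nu.

Lemma sd_comb y z a : sdg y -> sdg z -> sdg (fun f => a * y f + z f).
Proof.
move=> hy hz; split.
  move=> c f g hf hg /=; rewrite hy.1 // hz.1 //.
  by rewrite mulrDr !mulrA (mulrC a c) -!mulrA; rewrite addrACA mulrDr.
case: hy => _ [j1 [l1 [C1 hC1]]]; case: hz => _ [j2 [l2 [C2 hC2]]].
case: (hdir j1 l1 tt j2 l2 tt) => j [l [b [C0 [C0p hC0]]]].
case: b hC0 => hC0.
exists j, l, ((`|a| * C1 + C2) * C0) => f hf c hc.
case: (hC0 f hf c hc) => h1 h2.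
apply: le_trans (ler_normD _ _) _; rewrite normrM.
rewrite -mulrA mulrDl -mulrA; apply: lerD.
  by apply: ler_wpM2l => //; exact: hC1.
exact: hC2.
Qed.

Lemma sd_ext y z : (forall f, y f = z f) -> sdg y -> sdg z.
Proof. by move=> e; have -> : y = z by apply: funext. Qed.

End Gen.
End Lin.



Lemma lim_leR (R : realType) (x y t : R) : 0 <= t ->
  (forall e, 0 < e -> x <= y + t * e) -> x <= y.
Proof.
move=> t0 H; apply/ler_addgt0Pr => e e0.
have t1 : 0 < t + 1 by rewrite ltr_wpDl.
apply: le_trans (H (e / (t + 1)) (divr_gt0 e0 t1)) _.
rewrite lerD2l mulrA ler_pdivrMr // mulrDr mulr1 (mulrC t e) lerDl; exact: ltW.
Qed.

Lemma invn_small (R : realType) (e : R) : 0 < e -> exists N, forall n, (N <= n)%N -> n.+1%:R^-1 <= e.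
Proof.
move=> e0; exists (Num.Def.archi_bound e^-1) => n hn.
have h1 : e^-1 < (Num.Def.archi_bound e^-1)%:R by apply: archi_boundP; rewrite invr_ge0 ltW.
have h2 : (Num.Def.archi_bound e^-1)%:R <= n.+1%:R :> R.
  by rewrite ler_nat; apply: leq_trans hn (leqnSn n).
rewrite -(invrK e) lef_pV2 ?posrE ?invr_gt0 ?ltr0Sn //.
exact: ltW (lt_le_trans h1 h2).
Qed.

Section Core.
Variables (R : realType) (K : numFieldType) (io : {rmorphism R -> K}) (re : K -> R).
Hypothesis reD : forall x y : K, re (x + y) = re x + re y.
Hypothesis reM : forall r x, re (io r * x) = r * re x.
Hypothesis reI : forall r, re (io r) = r.
Hypothesis normI : forall x : K, `|x| = io (re `|x|).
Hypothesis re_le : forall x : K, re x <= re `|x|.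
Hypothesis leI : forall a b, (io a <= io b) = (a <= b).
Hypothesis normIr : forall r, `|io r| = io `|r|.

Lemma ioK (x : K) : 0 <= x -> io (re x) = x.
Proof. by move=> hx; rewrite -{2}(ger0_norm hx) normI ger0_norm. Qed.

Lemma ltI a b : (io a < io b) = (a < b).
Proof. by rewrite !lt_def !leI (inj_eq (fmorph_inj io)). Qed.

Lemma re_ge0 (x : K) : 0 <= x -> 0 <= re x.
Proof. by move=> hx; rewrite -leI rmorph0 ioK. Qed.

Lemma leK_lim (x y t : K) : 0 <= x -> 0 <= y -> 0 <= t ->
  (forall e : R, 0 < e -> x <= y + t * io e) -> x <= y.
Proof.
move=> hx hy ht H; rewrite -(ioK hx) -(ioK hy) leI.
apply: (@lim_leR _ _ _ (re t)); first exact: re_ge0.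
move=> e e0; rewrite -leI rmorphD rmorphM !ioK //; exact: H.
Qed.

Lemma re0 : re 0 = 0. Proof. by rewrite -(rmorph0 io) reI. Qed.
Lemma reN x : re (- x) = - re x.
Proof. by rewrite -mulN1r -(rmorphN1 io) reM mulN1r. Qed.
Lemma reB x y : re (x - y) = re x - re y. Proof. by rewrite reD reN. Qed.
Lemma re_sum (I : Type) (s : seq I) (F : I -> K) : re (\sum_(i <- s) F i) = \sum_(i <- s) re (F i).
Proof. elim: s => [|i s IH]; by rewrite ?big_nil ?re0 // !big_cons reD IH. Qed.

Lemma normK_re (x : K) : `|re x| <= re `|x|.
Proof.
rewrite ler_norml re_le andbT lerNl -reN.
by apply: le_trans (re_le _) _; rewrite normrN.
Qed.

Lemma rotate (w : K) : exists a : K, `|a| <= 1 /\ a * w = `|w|.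
Proof.
case: (eqVneq w 0) => [->|hw]; first by exists 0; rewrite normr0 mul0r ler01.
exists (`|w| / w); rewrite normrM normfV normr_id divff ?normr_eq0 //.
by rewrite mulfVK.
Qed.

Lemma normK0 (a : K) b : 0 <= b -> (forall e : R, 0 < e -> `|a| <= io e * b) -> a = 0.
Proof.
move=> hb H; apply/normr0_eq0/eqP; rewrite eq_le normr_ge0 andbT.
have := @leK_lim `|a| 0 b (normr_ge0 _) (lexx _) hb.
apply=> e e0; rewrite add0r mulrC; exact: H.
Qed.


Variables (V : lmodType K) (A : Type) (p : A -> V -> K) (G : (V -> K) -> Prop)
    (Omega X MM : Type) (emb : Omega -> X) (omega : MM -> X -> Prop)
    (M0 Mr : MM -> Prop)
    (domE : MM -> (Omega -> V) -> Prop) (TE : MM -> (Omega -> V) -> X -> V)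
    (domK : MM -> (Omega -> K^o) -> Prop) (TK : MM -> (Omega -> K^o) -> X -> K^o)
    (nu : MM -> Omega -> K)
    (JW LW : Type) (MlW : LW -> MM -> Prop) (nuW : JW -> LW -> MM -> Omega -> K)
    (U : MM -> X -> Prop).
Definition Mtop := fun m => ~ M0 m /\ ~ Mr m.
Definition MlV := fun (_ : unit) m => Mtop m.
Definition nuV := fun (_ : unit) (_ : unit) m x => nu m x.
Definition FV := FVs emb omega domK TK M0 MlV nuV.
Definition FW := FVs emb omega domK TK M0 MlW nuW.
Definition FW' := sdual emb omega domK TK M0 MlW nuW.
Definition FV' := sdual emb omega domK TK M0 MlV nuV.
Definition normV := fun f c => sns emb TK MlV nuV f tt tt c.
Definition snsW := sns emb TK MlW nuW.
Definition BFV := fun f => FV f /\ normV f 1.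
Definition epsE := eps_prod p emb omega domK TK M0 MlW nuW.

Hypothesis hE : nontrivial_lc_hausdorff p.
Hypothesis hlc : locally_complete p.
Hypothesis hG : lin_subspace_of_dual p G.
Hypothesis hGb : determines_boundedness p G.
Hypothesis homV : forall m, Mtop m -> forall x, omega m (emb x).
Hypothesis hOm : inhabited Omega.
Hypothesis hMt : exists m, Mtop m.
Hypothesis hnu0 : forall m x, Mtop m -> 0 <= nu m x.
Hypothesis hJW : inhabited JW.
Hypothesis hLW : inhabited LW.
Hypothesis hMlW : forall l, exists m, MlW l m.
Hypothesis hMlWt : forall m, Mtop m <-> exists l, MlW l m.
Hypothesis hnuW0 : forall j l m x, 0 <= nuW j l m x.
Hypothesis hlinK : linear_family omega domK TK.
Hypothesis hdsV : scalar_dom_space emb omega domK TK M0 MlV nuV.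
Hypothesis hdsW : scalar_dom_space emb omega domK TK M0 MlW nuW.
Hypothesis hcons : forall u, epsE u -> forall m y, omega m y ->
      [/\ domE m (Smap u), FW' (fun f => TK m f y) &
          TE m (Smap u) y = u (fun f => TK m f y)].
Hypothesis hcomp : s_compact emb omega domK TK M0 MlW nuW BFV.
Hypothesis hUom : forall m y, U m y -> omega m y.
Hypothesis hUdual : forall m y, U m y -> sdual emb omega domK TK M0 MlV nuV (fun f => TK m f y).
Hypothesis hUuniq : forall f, FV f -> (forall m y, U m y -> TK m f y = 0) -> forall w, f w = 0.
Variable g : MM -> X -> V.
Hypothesis hg : forall e', G e' -> exists fe, FV fe /\ forall m y, U m y -> TK m fe y = e' (g m y).

Lemma hnuV j l m x : MlV l m -> 0 <= nuV j l m x.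
Proof. exact: hnu0. Qed.
Lemma homV' l m x : MlV l m -> omega m (emb x).
Proof. by move=> h; apply: homV. Qed.
Lemma hnuW j l m x : MlW l m -> 0 <= nuW j l m x.
Proof. by move=> _; apply: hnuW0. Qed.
Lemma homW l m x : MlW l m -> omega m (emb x).
Proof. by move=> h; apply: homV; apply/hMlWt; exists l. Qed.

Lemma normV_ge0 f c : normV f c -> 0 <= c.
Proof.
case: hOm => x0; case: hMt => m hm => /(_ x0 m hm).
apply: le_trans; apply: mulr_ge0; [exact: normr_ge0 | exact: hnu0].
Qed.

Lemma snsW_ge0 f j l c : snsW f j l c -> 0 <= c.
Proof.
case: hOm => x0; case: (hMlW l) => m hm => /(_ x0 m hm).
apply: le_trans; apply: mulr_ge0; [exact: normr_ge0 | exact: hnuW0].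
Qed.

Lemma normV_mono f c c' : normV f c -> c <= c' -> normV f c'.
Proof. by move=> h hc x m hm; apply: le_trans (h x m hm) hc. Qed.

Lemma FV_norm f : FV f -> exists c, normV f c.
Proof. by case=> _ _ /(_ tt tt tt) [c hc]; exists c. Qed.

Lemma normVZ f a c : FV f -> normV f c -> normV (fun w => a *: f w) (`|a| * c).
Proof.
move=> [df _ _] h x m hm; rewrite /absK (TZ hlinK) //; last exact: homV.
by rewrite /GRing.scale /= normrM -mulrA; apply: ler_wpM2l => //; exact: h.
Qed.

Lemma FV_scaleB f c : FV f -> normV f c -> 0 < c -> BFV (fun w => c^-1 *: f w).
Proof.
move=> hf hn hc; split; first exact: (FVsZ hlinK hnuV homV').
have := normVZ (c^-1) hf hn; rewrite normfV gtr0_norm // mulVf //.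
by apply/lt0r_neq0.
Qed.

Lemma B0 : BFV (fun _ => 0).
Proof.
split; first exact: (FVs0 M0 hlinK nuV homV').
by move=> x m hm; rewrite /absK (T0 hlinK) // ?normr0 ?mul0r ?ler01 //; exact: homV.
Qed.

Lemma B_absconv : s_abs_convex BFV.
Proof.
move=> f h a b [hf nf] [hh nh] hab; split; first exact: (FVs2 hlinK hnuV homV').
apply: normV_mono hab; rewrite -{1}(mulr1 `|a|) -{1}(mulr1 `|b|).
apply: (sns2 hlinK hnuV homV'); [by case: hf | by case: hh | exact: nf | exact: nh].
Qed.

Lemma FV_FW f : FV f -> FW f.
Proof.
move=> hf; case: (FV_norm hf) => c hc.
have c0 := normV_ge0 hc.
have c1 : 0 < c + 1 by rewrite ltr_wpDl.
have hc1 : c <= c + 1 by rewrite lerDl.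
have hB := FV_scaleB hf (normV_mono hc hc1) c1.
have := FVsZ hlinK hnuW homW (c + 1) (hcomp.1 _ hB).
apply: (FVs_ext); move=> w /=; rewrite scalerA mulfV ?scale1r //.
exact: lt0r_neq0.
Qed.

Lemma bnd_scale (z : (Omega -> K^o) -> K) (t : K) :
  (forall a f, FV f -> z (fun w => a *: f w) = a * z f) -> 0 <= t ->
  (forall f, BFV f -> `|z f| <= t) ->
  forall f c, FV f -> normV f c -> `|z f| <= t * c.
Proof.
move=> hz ht hb f c hf hn.
have c0 := normV_ge0 hn.
apply: leK_lim; [exact: normr_ge0 | exact: mulr_ge0 | exact: ht | move=> e e0].
have ie : 0 < io e by rewrite -(rmorph0 io) ltI.
have ce : 0 < c + io e by apply: lt_le_trans ie _; rewrite lerDr.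
have hce : c <= c + io e by rewrite lerDl ltW.
have := hb _ (FV_scaleB hf (normV_mono hn hce) ce).
rewrite hz // normrM normfV (gtr0_norm ce) ler_pdivrMl //.
by rewrite -mulrDr mulrC.
Qed.


Lemma hdirW : sn_directed emb omega (absK (K:=K)) domK TK M0 MlW nuW.
Proof. by case: hdsW. Qed.
Lemma FW_2 a b f h : FW f -> FW h -> FW (fun w => a *: f w + b *: h w).
Proof. exact: (FVs2 hlinK hnuW homW). Qed.
Lemma FW_Z a f : FW f -> FW (fun w => a *: f w).
Proof. exact: (FVsZ hlinK hnuW homW). Qed.
Lemma FW_B f h : FW f -> FW h -> FW (fun w => f w - h w).
Proof. exact: (FVsB hlinK hnuW homW). Qed.
Lemma FV_2 a b f h : FV f -> FV h -> FV (fun w => a *: f w + b *: h w).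
Proof. exact: (FVs2 hlinK hnuV homV'). Qed.
Lemma W_Z y a f : FW' y -> FW f -> y (fun w => a *: f w) = a * y f.
Proof. exact: (sdZ hlinK homW). Qed.
Lemma W_2 y a b f h : FW' y -> FW f -> FW h -> y (fun w => a *: f w + b *: h w) = a * y f + b * y h.
Proof. exact: (sd2 hlinK hnuW homW). Qed.
Lemma W_B y f h : FW' y -> FW f -> FW h -> y (fun w => f w - h w) = y f - y h.
Proof. exact: (sdB hlinK hnuW homW). Qed.
Lemma W_comb y z a : FW' y -> FW' z -> FW' (fun f => a * y f + z f).
Proof. move=> hy hz; exact: (sd_comb hdirW a hy hz). Qed.
Lemma W_ext y z : (forall f, y f = z f) -> FW' y -> FW' z.
Proof. exact: sd_ext. Qed.
Lemma W_zero : FW' (fun _ => 0).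
Proof.
split; first by move=> a f h _ _; rewrite mulr0 addr0.
case: hJW => j; case: hLW => l; exists j, l, 0 => f _ c _.
by rewrite normr0 mul0r.
Qed.
Lemma W_sub y z : FW' y -> FW' z -> FW' (fun f => y f - z f).
Proof.
move=> hy hz; apply: (W_ext (y := fun f => (-1) * z f + y f)).
  by move=> f; rewrite mulN1r addrC.
exact: W_comb.
Qed.

Lemma p0 a : p a 0 = 0.
Proof.
case: hE => _ hs _ _ _; case: (hs a) => _ hZ _.
by have := hZ 0 0; rewrite scale0r normr0 mul0r.
Qed.

Lemma p_ge0 a x : 0 <= p a x.
Proof. by case: hE => _ hs _ _ _; case: (hs a). Qed.

Lemma epsE0 : epsE (fun _ => 0).
Proof.
split.
- by [].
- by move=> a y z _ _; rewrite scaler0 addr0.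
- move=> a; exists (fun _ => False), 0; split.
  + by split; [by [] | move=> I O _ _; exists [::] => f []].
  + by move=> f h ? ? [].
  + by move=> y _ c _; rewrite p0 mul0r.
Qed.

Lemma TK_FW' m y : omega m y -> FW' (fun f => TK m f y).
Proof. by move=> hy; case: (hcons epsE0 hy). Qed.

Fixpoint allU (s : seq (K * (MM * X))) : Prop :=
  if s is k :: s' then U k.2.1 k.2.2 /\ allU s' else True.

Definition zf (s : seq (K * (MM * X))) : (Omega -> K^o) -> K :=
  fun f => \sum_(k <- s) k.1 * (TK k.2.1 f k.2.2 : K).
Definition zE (s : seq (K * (MM * X))) : V := \sum_(k <- s) k.1 *: g k.2.1 k.2.2.

Lemma zf_FW' s : allU s -> FW' (zf s).
Proof.
elim: s => [|k s IH] /=.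
  by move=> _; apply: W_ext W_zero => f; rewrite /zf big_nil.
case=> hk hs.
apply: (W_ext (y := fun f => k.1 * (TK k.2.1 f k.2.2 : K) + zf s f)).
  by move=> f; rewrite /zf big_cons.
apply: W_comb; [apply: TK_FW'; exact: hUom | exact: IH].
Qed.

Lemma zf_hom s a f : allU s -> FV f -> zf s (fun w => a *: f w) = a * zf s f.
Proof. by move=> hs hf; rewrite W_Z //; [exact: zf_FW' | exact: FV_FW]. Qed.

Lemma zf_bnd s : allU s -> exists M, 0 <= M /\ forall f, BFV f -> `|zf s f| <= M.
Proof.
elim: s => [|k s IH] /=.
  by move=> _; exists 0; split => // f _; rewrite /zf big_nil normr0.
case=> hk /IH [M [M0' hM]].
case: (hUdual hk) => _ [j [l [C hC]]]; case: j hC; case: l => hC.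
have hCB f : BFV f -> `|(TK k.2.1 f k.2.2 : K)| <= C.
  by move=> [hf hn]; rewrite -(mulr1 C); exact: hC.
have C0 : 0 <= C by apply: le_trans (hCB _ B0); exact: normr_ge0.
exists (`|k.1| * C + M); split; first by rewrite addr_ge0 // mulr_ge0.
move=> f hf; rewrite /zf big_cons; apply: le_trans (ler_normD _ _) _.
rewrite normrM; apply: lerD; last exact: hM.
by apply: ler_wpM2l => //; exact: hCB.
Qed.

Section Dual.
Variable e' : V -> K.
Hypothesis he : in_dual p e'.
Lemma e_lin a x y : e' (a *: x + y) = a * e' x + e' y.
Proof. exact: (he.1 a x y I I). Qed.
Lemma e0 : e' 0 = 0.
Proof. by have := e_lin (-1) 0 0; rewrite scaler0 addr0 mulN1r addNr. Qed.
Lemma eZ a x : e' (a *: x) = a * e' x.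
Proof. by have := e_lin a x 0; rewrite !addr0 e0 addr0. Qed.
Lemma eD x y : e' (x + y) = e' x + e' y.
Proof. by have := e_lin 1 x y; rewrite scale1r mul1r. Qed.
Lemma eB x y : e' (x - y) = e' x - e' y.
Proof. by have := e_lin (-1) y x; rewrite scaleN1r mulN1r addrC [_ + e' x]addrC. Qed.
Lemma e_bound : exists a (C : K), 0 <= C /\ forall x, `|e' x| <= C * p a x.
Proof.
case: he => _ [a [C hC]]; exists a.
case: (pselect (exists x, 0 < p a x)) => [[x hx]|hn].
  exists C; split => //; have := le_trans (normr_ge0 _) (hC x).
  by rewrite pmulr_lge0.
exists 0; split => // x; rewrite mul0r.
have px : p a x = 0.
  have := p_ge0 a x; rewrite le0r => /orP[/eqP //| h].
  by exfalso; apply: hn; exists x.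
by have := hC x; rewrite px mulr0.
Qed.
End Dual.

Lemma G_dual e' : G e' -> in_dual p e'.
Proof. by case: hG => h _ _; exact: h. Qed.

Definition rep (e' : V -> K) f := FV f /\ forall m y, U m y -> TK m f y = e' (g m y).

Lemma e_zE e' f s : G e' -> rep e' f -> allU s -> e' (zE s) = zf s f.
Proof.
move=> he [hf hr]; have hd := G_dual he.
elim: s => [|k s IH] /=; first by rewrite /zE /zf !big_nil e0.
case=> hk /IH; rewrite /zE /zf !big_cons => <-.
by rewrite eD // eZ // hr.
Qed.

Definition D (x : V) : Prop :=
  forall e', G e' -> forall f, rep e' f -> forall c, normV f c -> `|e' x| <= c.

Lemma D_closed : lc_closed p D.
Proof.
move=> x Hx e' he f hr c hn.
have hd := G_dual he; case: (e_bound hd) => a [C [C0 hC]].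
have c0 := normV_ge0 hn.
apply: (@leK_lim _ c 1); [exact: normr_ge0 | exact: c0 | exact: ler01 | move=> r r0].
have ir : 0 < io r by rewrite -(rmorph0 io) ltI.
have C1 : 0 < C + 1 by rewrite ltr_wpDl.
case: (Hx a (io r / (C + 1)) (divr_gt0 ir C1)) => d [hD hpd].
have -> : x = d + (x - d) by rewrite addrC subrK.
rewrite eD //; apply: le_trans (ler_normD _ _) _; rewrite mul1r.
apply: lerD; first exact: (hD e' he f hr c hn).
apply: le_trans (hC _) _.
apply: le_trans (_ : C * (io r / (C + 1)) <= _).
  by apply: ler_wpM2l => //; exact: ltW.
rewrite mulrA ler_pdivrMr // (mulrC (io r)) ler_pM2r // lerDl; exact: ler01.
Qed.

Lemma D_bounded : lc_bounded p D.
Proof.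
apply: hGb => e' he; case: (hg he) => f [hf hr].
case: (FV_norm hf) => c hc; exists c => x hx.
exact: (hx e' he f (conj hf hr) c hc).
Qed.

Lemma D_absconv : abs_convex D.
Proof.
move=> x y a b hx hy hab e' he f hr c hn.
have hd := G_dual he; have c0 := normV_ge0 hn.
rewrite eD // !eZ //; apply: le_trans (ler_normD _ _) _.
rewrite !normrM; apply: le_trans (_ : `|a| * c + `|b| * c <= _).
  by apply: lerD; apply: ler_wpM2l => //; [exact: (hx e' he f hr c hn) | exact: (hy e' he f hr c hn)].
rewrite -mulrDl; exact: ler_piMl c0 hab.
Qed.

Lemma D_complete : gauge_complete D.
Proof. exact: hlc D_closed D_bounded D_absconv. Qed.

Lemma D0 : D 0.
Proof.
move=> e' he f _ c hn; rewrite e0; first by rewrite normr0; exact: normV_ge0 hn.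
exact: G_dual.
Qed.

Lemma sep x : (forall e', G e' -> e' x = 0) -> x = 0.
Proof.
move=> hx; case: hE => _ _ _ haus _; apply: haus => a.
pose S := fun v => exists k : nat, v = k%:R *: x.
have hS : lc_bounded p S.
  apply: hGb => e' he; exists 0 => v [k ->].
  by rewrite eZ ?hx ?mulr0 ?normr0 //; exact: G_dual.
case: (hS a) => C hC.
have C0 : 0 <= C by have := hC 0 (ex_intro _ 0%N (esym (scale0r _))); rewrite p0.
have hk k : k%:R * p a x <= C.
  have := hC _ (ex_intro _ k erefl).
  by case: hE => _ hs _ _ _; case: (hs a) => _ -> _; rewrite normr_nat.
apply/eqP; rewrite -(ioK (p_ge0 a x)) -(rmorph0 io) (inj_eq (fmorph_inj io)).
set q := re (p a x); have q0 : 0 <= q := re_ge0 (p_ge0 a x).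
have hkR k : k%:R * q <= re C.
  by have := hk k; rewrite -{1}(ioK (p_ge0 a x)) -{1}(ioK C0) -(rmorph_nat io) -rmorphM leI.
rewrite eq_le q0 andbT leNgt; apply/negP => qp.
have := archi_boundP (divr_ge0 (re_ge0 C0) q0); set k := Num.Def.archi_bound _ => hk'.
have := hkR k; rewrite -ler_pdivlMr // => h.
by have := lt_le_trans hk' h; rewrite ltxx.
Qed.

Definition cont (phi : (Omega -> K^o) -> R) f := forall eta : R, 0 < eta ->
  exists j l (r : R), 0 < r /\ forall h, FW h -> forall c, c < io r ->
    snsW (fun w => h w - f w) j l c -> `|phi h - phi f| <= eta.

Lemma re_mono (x y : K) : 0 <= x -> x <= y -> re x <= re y.
Proof. by move=> hx hxy; rewrite -leI !ioK // (le_trans hx hxy). Qed.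

Lemma ler_normC (C c x : K) : 0 <= c -> 0 <= x -> x <= C * c -> x <= `|C| * c.
Proof.
move=> c0 x0 h; move: c0; rewrite le0r => /orP[/eqP c0|cp].
  by move: h; rewrite c0 !mulr0.
have : 0 <= C by rewrite -(pmulr_lge0 _ cp) (le_trans x0 h).
by move=> C0; rewrite ger0_norm.
Qed.

Lemma cont_W y f : FW' y -> FW f -> cont (fun h => re (y h)) f.
Proof.
move=> hy hf eta eta0; case: (hy) => _ [j [l [C hC]]].
set C' := re `|C|; have C'0 : 0 <= C' by apply: re_ge0.
have C1 : 0 < C' + 1 by rewrite ltr_wpDl.
exists j, l, (eta / (C' + 1)); split; first exact: divr_gt0.
move=> h hh c hc hs.
have c0 := snsW_ge0 hs.
have hd := FW_B hh hf.
have := hC _ hd c hs; rewrite W_B // => hb.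
have hb' := ler_normC c0 (normr_ge0 _) hb.
rewrite -reB; apply: le_trans (normK_re _) _.
apply: (@le_trans _ _ (re (`|C| * c))); first exact: re_mono (normr_ge0 _) hb'.
apply: (@le_trans _ _ (C' * (eta / (C' + 1)))).
  rewrite -leI rmorphM /C' ioK ?mulr_ge0 // -normI.
  by rewrite ler_wpM2l // ltW.
rewrite mulrA ler_pdivrMr // mulrC ler_pM2l // lerDl; exact: ler01.
Qed.

Lemma cont_ext phi psi f : (forall h, phi h = psi h) -> cont phi f -> cont psi f.
Proof. by move=> e; have -> : phi = psi by apply: funext. Qed.

Lemma cont_const (k : R) f : cont (fun _ => k) f.
Proof.
move=> eta eta0; case: hJW => j; case: hLW => l; exists j, l, 1; split => // *.
by rewrite subrr normr0 ltW.
Qed.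

Lemma cont_add phi psi f : FW f -> cont phi f -> cont psi f -> cont (fun h => phi h + psi h) f.
Proof.
move=> hf c1 c2 eta eta0.
have e2 : 0 < eta / 2 by rewrite divr_gt0.
case: (c1 _ e2) => j1 [l1 [r1 [r10 H1]]]; case: (c2 _ e2) => j2 [l2 [r2 [r20 H2]]].
case: (hdirW j1 l1 tt j2 l2 tt) => j [l [b [C0 [C00 HC]]]].
case: b HC => HC.
set r := Num.min r1 r2.
have r0 : 0 < r by rewrite lt_min r10 r20.
exists j, l, (r / re C0); split.
  by rewrite divr_gt0 // -ltI rmorph0 ioK // ltW.
move=> h hh c hc hs.
case: (HC _ (FW_B hh hf) c hs) => s1 s2.
have hC0 : io (re C0) = C0 by rewrite ioK // ltW.
have hcr : C0 * c < io r.
  by move: hc; rewrite rmorphM fmorphV hC0 ltr_pdivlMr // mulrC.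
have hr1 : C0 * c < io r1 by apply: lt_le_trans hcr _; rewrite leI ge_min lexx.
have hr2 : C0 * c < io r2 by apply: lt_le_trans hcr _; rewrite leI ge_min lexx orbT.
have := H1 h hh _ hr1 s1; have := H2 h hh _ hr2 s2 => b2 b1.
rewrite opprD addrACA; apply: le_trans (ler_normD _ _) _.
by rewrite (splitr eta); apply: lerD.
Qed.

Lemma cont_comp (F : R -> R) phi f : cont phi f ->
  (forall eta, 0 < eta -> exists2 d, 0 < d & forall t, `|t - phi f| <= d -> `|F t - F (phi f)| <= eta) ->
  cont (fun h => F (phi h)) f.
Proof.
move=> hc hF eta eta0; case: (hF _ eta0) => d d0 hd.
case: (hc _ d0) => j [l [r [r0 H]]]; exists j, l, r; split => // h hh c hcr hs.
exact/hd/(H h hh c hcr hs).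
Qed.

Definition pos (a : R) := if 0 <= a then a else 0.
Lemma pos_ge0 a : 0 <= pos a.
Proof. by rewrite /pos; case: ifP. Qed.
Lemma pos_lip a b : `|pos a - pos b| <= `|a - b|.
Proof.
rewrite /pos; case: ifP => ha; case: ifP => hb; rewrite ?subrr ?normr0 //.
- move/negbT: hb; rewrite -ltNge => hb.
  rewrite subr0 (ger0_norm ha) ger0_norm; lra.
- move/negbT: ha; rewrite -ltNge => ha.
  rewrite sub0r normrN (ger0_norm hb) ler0_norm; lra.
Qed.
Lemma pos_id a : pos a * (a - pos a) = 0.
Proof. by rewrite /pos; case: ifP => _; rewrite ?subrr ?mulr0 ?mul0r. Qed.
Lemma pos_sq a x : pos (a - x) ^+ 2 <= pos a ^+ 2 - 2 * pos a * x + x ^+ 2.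
Proof.
rewrite /pos; case: ifP => h1; case: ifP => h2.
- nra.
- have h3 : a < 0 by rewrite ltNge h2.
  nra.
- have h3 : a - x < 0 by rewrite ltNge h1.
  nra.
- have h3 : a - x < 0 by rewrite ltNge h1.
  have h4 : a < 0 by rewrite ltNge h2.
  nra.
Qed.

Definition Fq (eps t : R) := pos (eps - t) ^+ 2.

Lemma Fq_cont eps s eta : 0 < eta ->
  exists2 d, 0 < d & forall t, `|t - s| <= d -> `|Fq eps t - Fq eps s| <= eta.
Proof.
move=> eta0; set b := pos (eps - s); have b0 : 0 <= b := pos_ge0 _.
have b1 : 0 < 1 + 2 * b by lra.
exists (Num.min 1 (eta / (1 + 2 * b))).
  by rewrite lt_min ltr01 divr_gt0.
move=> t ht; set a := pos (eps - t); have a0 : 0 <= a := pos_ge0 _.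
have hab : `|a - b| <= Num.min 1 (eta / (1 + 2 * b)).
  apply: le_trans (pos_lip _ _) _.
  have -> : eps - t - (eps - s) = - (t - s) by ring.
  by rewrite normrN.
set d := Num.min 1 (eta / (1 + 2 * b)) in hab.
have d1 : d <= 1 by rewrite ge_min lexx.
have d2 : d * (1 + 2 * b) <= eta.
  by rewrite -ler_pdivlMr // ge_min lexx orbT.
move: hab; rewrite /Fq -/a -/b !ler_norml => /andP [h1 h2].
apply/andP; split; nra.
Qed.

Lemma cont_sum n (phi : nat -> (Omega -> K^o) -> R) f : FW f ->
  (forall k, (k < n)%N -> cont (phi k) f) -> cont (fun h => \sum_(k < n) phi k h) f.
Proof.
move=> hf; elim: n => [|n IH] H.
  by apply: cont_ext (cont_const 0 f) => h; rewrite big_ord0.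
apply: cont_ext (cont_add hf (IH _) (H n _)).
- by move=> h; rewrite big_ord_recr.
- by move=> k hk; apply: H; rewrite ltnS ltnW.
- by [].
Qed.

Lemma open_cont (P : Prop) (a : R) phi : (forall f, FW f -> cont phi f) ->
  s_open emb omega domK TK M0 MlW nuW (fun f => FW f /\ (P /\ a < phi f)).
Proof.
move=> hc f [hf [hP ha]]; split => //.
have e0 : 0 < (phi f - a) / 2 by rewrite divr_gt0 // subr_gt0.
case: (hc f hf _ e0) => j [l [r [r0 H]]].
exists j, l, (io r); split; first by rewrite -(rmorph0 io) ltI.
move=> h hh [c [hcr hs]]; split => //; split => //.
move: (H h hh c hcr hs); rewrite ler_norml => /andP [h1 h2]; lra.
Qed.

Lemma list_min (T : Type) (P : T -> Prop) (F : T -> R) (x0 : T) (s : seq T) : P x0 ->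
  exists g1, P g1 /\ forall i, List.In i s -> P i -> F g1 <= F i.
Proof.
move=> h0; elim: s => [|i s [g1 [hg1 H]]]; first by exists x0.
case: (pselect (P i /\ F i < F g1)) => [[hi hlt]|hn].
  exists i; split => // k /= [<- //|hk] hPk.
  exact: le_trans (ltW hlt) (H k hk hPk).
exists g1; split => // k /= [<- hPk|hk hPk]; last exact: H.
by rewrite leNgt; apply/negP => hl; apply: hn.
Qed.

Lemma compact_min F : (forall f, FW f -> cont F f) ->
  exists f0, BFV f0 /\ forall f, BFV f -> F f0 <= F f.
Proof.
move=> hc; apply: contrapT => hn.
have H f : BFV f -> exists g1, BFV g1 /\ F g1 < F f.
  move=> hf; apply: contrapT => hn2; apply: hn; exists f; split => // h hh.
  rewrite leNgt; apply/negP => hl; apply: hn2; by exists h.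
have [s hs] := hcomp.2 _ (fun g1 => fun f => FW f /\ (BFV g1 /\ F g1 < F f))
  (fun g1 => @open_cont (BFV g1) (F g1) F hc)
  (fun f hf => let: ex_intro g1 (conj hg1 hlt) := H f hf in ex_intro _ g1 (conj (hcomp.1 f hf) (conj hg1 hlt))).
case: (list_min F s B0) => g0 [hg0 Hm].
case: (hs g0 hg0) => i hi [_ [hBi hlt]].
by have := Hm i hi hBi; rewrite leNgt hlt.
Qed.

Lemma var_le0 n (a b : nat -> R) :
  (forall t, 0 < t -> t <= 1 -> 0 <= \sum_(k < n) (t * b k - 2 * a k)) ->
  \sum_(k < n) a k <= 0.
Proof.
move=> H; set SA := \sum_(k < n) a k; set SB := \sum_(k < n) b k.
have E t : \sum_(k < n) (t * b k - 2 * a k) = t * SB - 2 * SA.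
  by rewrite sumrB -!mulr_sumr.
rewrite leNgt; apply/negP => Ap.
have hB0 : 0 <= SB.
  have := H 1 ltr01 (lexx _); rewrite E mul1r => h; lra.
have B1 : 0 < SB + 1 by lra.
set t := Num.min 1 (SA / (SB + 1)).
have t0 : 0 < t by rewrite lt_min ltr01 divr_gt0.
have t1 : t <= 1 by rewrite ge_min lexx.
have t2 : t * (SB + 1) <= SA by rewrite -ler_pdivlMr // ge_min lexx orbT.
have := H t t0 t1; rewrite E => h.
nra.
Qed.

Lemma FIP n (h : nat -> (Omega -> K^o) -> K) (eps : R) :
  (forall k, (k < n)%N -> FW' (h k)) ->
  (forall lam : nat -> R, (forall k, 0 <= lam k) -> 0 < \sum_(k < n) lam k ->
     exists2 f, BFV f & eps * \sum_(k < n) lam k < \sum_(k < n) lam k * re (h k f)) ->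
  exists2 f, BFV f & forall k, (k < n)%N -> eps <= re (h k f).
Proof.
move=> hW Hyp.
pose F f := \sum_(k < n) Fq eps (re (h k f)).
have hcF f : FW f -> cont F f.
  move=> hf; apply: (@cont_sum n (fun k g1 => Fq eps (re (h k g1)))) => // k hk.
  apply: (@cont_comp (Fq eps) (fun g1 => re (h k g1))); first exact: cont_W (hW k hk) hf.
  by move=> eta eta0; apply: Fq_cont.
case: (compact_min hcF) => f0 [hf0 Hmin].
apply: contrapT => hn.
pose v k := re (h k f0).
pose lam k := pos (eps - v k).
have lam0 k : 0 <= lam k by apply: pos_ge0.
have [k0 [hk0 hlt]] : exists k, (k < n)%N /\ v k < eps.
  apply: contrapT => hn2; apply: hn; exists f0 => // k hk.
  rewrite leNgt; apply/negP => hl; apply: hn2; by exists k.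
have Lp : 0 < \sum_(k < n) lam k.
  rewrite (bigD1 (Ordinal hk0)) //=.
  apply: lt_le_trans (_ : 0 < lam k0) _.
    by rewrite /lam /pos subr_ge0 ltW // subr_gt0.
  by rewrite lerDl sumr_ge0.
case: (Hyp lam lam0 Lp) => f hf Hf.
pose d k := re (h k f) - v k.
have Hvar : \sum_(k < n) lam k * d k <= 0.
  apply: (@var_le0 n (fun k => lam k * d k) (fun k => d k ^+ 2)) => t t0 t1.
  pose gt := fun w => io (1 - t) *: f0 w + io t *: f w.
  have hgt : BFV gt.
    apply: B_absconv => //.
    rewrite !normIr !ger0_norm; [|lra|lra].
    by rewrite -rmorphD subrK rmorph1.
  have hre k : (k < n)%N -> re (h k gt) = v k + t * d k.
    move=> hk; rewrite /gt W_2 //; [|exact: hW|exact: hcomp.1|exact: hcomp.1].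
    by rewrite reD !reM /d /v; ring.
  have := Hmin _ hgt.
  rewrite /F => hle.
  have hle2 : \sum_(k < n) Fq eps (re (h k gt)) <=
      \sum_(k < n) (lam k ^+ 2 - 2 * lam k * (t * d k) + (t * d k) ^+ 2).
    apply: ler_sum => k _; rewrite hre // /Fq.
    have -> : eps - (v k + t * d k) = (eps - v k) - t * d k by ring.
    exact: pos_sq.
  have hF0 : \sum_(k < n) Fq eps (re (h k f0)) = \sum_(k < n) lam k ^+ 2 by [].
  have := le_trans hle hle2; rewrite hF0 -subr_ge0 -sumrB.
  have -> : \sum_(k < n) (lam k ^+ 2 - 2 * lam k * (t * d k) + (t * d k) ^+ 2 - lam k ^+ 2)
      = t * \sum_(k < n) (t * d k ^+ 2 - 2 * (lam k * d k)).
    by rewrite mulr_sumr; apply: eq_bigr => k _; ring.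
  by rewrite pmulr_rge0.
have E1 : \sum_(k < n) lam k * re (h k f) =
    \sum_(k < n) lam k * v k + \sum_(k < n) lam k * d k.
  by rewrite -big_split; apply: eq_bigr => k _ /=; rewrite /d; ring.
have E2 : \sum_(k < n) lam k * v k <= eps * \sum_(k < n) lam k.
  rewrite mulr_sumr; apply: ler_sum => k _.
  have := pos_id (eps - v k); rewrite -/(lam k) => hid.
  have : lam k * v k = eps * lam k - lam k ^+ 2 by rewrite -[eps * _]subr0 -hid; ring.
  move=> ->; rewrite lerBlDr lerDl; exact: sqr_ge0.
move: Hf; rewrite E1 => Hf; lra.
Qed.

Definition scl (c : K) (s : seq (K * (MM * X))) := map (fun q => (c * q.1, q.2)) s.

Lemma zf_cat s1 s2 f : zf (s1 ++ s2) f = zf s1 f + zf s2 f.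
Proof. by rewrite /zf big_cat. Qed.
Lemma zf_scl c s f : zf (scl c s) f = c * zf s f.
Proof. by rewrite /zf big_map mulr_sumr; apply: eq_bigr => q _; rewrite mulrA. Qed.
Lemma zf_flat (T : Type) (l : seq T) (F : T -> seq (K * (MM * X))) f :
  zf (flatten (map F l)) f = \sum_(k <- l) zf (F k) f.
Proof.
elim: l => [|k l IH] /=; first by rewrite /zf !big_nil.
by rewrite zf_cat IH big_cons.
Qed.
Lemma allU_cat s1 s2 : allU s1 -> allU s2 -> allU (s1 ++ s2).
Proof. by elim: s1 => [|k s1 IH] //= [hk hs] h2; split => //; apply: IH. Qed.
Lemma allU_scl c s : allU s -> allU (scl c s).
Proof. by elim: s => [|k s IH] //= [hk hs]; split => //; apply: IH. Qed.
Lemma allU_flat (T : Type) (l : seq T) (F : T -> seq (K * (MM * X))) :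
  (forall k, allU (F k)) -> allU (flatten (map F l)).
Proof. by move=> H; elim: l => [|k l IH] //=; apply: allU_cat. Qed.

Lemma B_scale f a : BFV f -> `|a| <= 1 -> BFV (fun w => a *: f w).
Proof.
move=> hf ha; have hab : `|a| + `|0 : K| <= 1 by rewrite normr0 addr0.
have := B_absconv hf B0 hab.
have -> : (fun w => a *: f w + 0 *: (0 : K^o)) = (fun w => a *: f w).
  by apply: funext => w; rewrite scaler0 addr0.
by [].
Qed.

Lemma density y : FW' y -> forall eps : R, 0 < eps ->
  exists s, allU s /\ forall f, BFV f -> `|y f - zf s f| <= io eps.
Proof.
move=> hy eps e0; apply: contrapT => hn.
have Hyp1 s : allU s -> exists2 f, BFV f & eps < re (y f - zf s f).
  move=> hs; apply: contrapT => hn2; apply: hn; exists s; split => // f hf.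
  apply: contrapT => hn3; apply: hn2.
  have hw : eps < re `|y f - zf s f|.
    by rewrite ltNge; apply/negP => hl; apply: hn3; rewrite normI leI.
  case: (rotate (y f - zf s f)) => a [ha haw].
  exists (fun w => a *: f w); first exact: B_scale.
  have hfW := hcomp.1 _ hf.
  by rewrite W_Z // zf_hom //; [rewrite -mulrBr haw | exact: hf.1].
pose Idx := {s : seq (K * (MM * X)) | allU s}.
pose i0 : Idx := exist _ [::] Logic.I.
pose phi (i : Idx) f := re (zf (sval i) f - y f).
pose O (i : Idx) := fun f => FW f /\ (True /\ - eps < phi i f).
have hO i : s_open emb omega domK TK M0 MlW nuW (O i).
  apply: open_cont => f hf; apply: cont_W => //.
  apply: W_sub => //; exact: zf_FW' (svalP i).
have hcov f : BFV f -> exists i, O i f.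
  move=> hf; apply: contrapT => hn2.
  have H s (hs : allU s) : eps <= re (y f - zf s f).
    rewrite leNgt; apply/negP => hl; apply: hn2; exists (exist _ s hs).
    split; first exact: hcomp.1.
    by split => //; rewrite /phi /= -opprB reN ltrN2.
  have hT m x : U m x -> TK m f x = 0.
    move=> hU; apply: contrapT => hne.
    have := H [:: (y f / TK m f x, (m, x))] (conj hU Logic.I).
    rewrite /zf big_cons big_nil addr0 /= divfK; last by apply/eqP.
    by rewrite subrr re0 leNgt e0.
  have hf0 : f = (fun _ => 0) by apply: funext => w; apply: hUuniq => //; case: hf.
  have := H [::] Logic.I; rewrite /zf big_nil subr0 hf0.
  by rewrite (sd0 hlinK homW hy) re0 leNgt e0.
have [ss hss] := hcomp.2 Idx O hO hcov.
pose n := List.length ss.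
pose hk k := fun f => y f - zf (sval (List.nth k ss i0)) f.
have hW k : (k < n)%N -> FW' (hk k).
  by move=> _; apply: W_sub => //; exact: zf_FW' (svalP _).
have Hyp2 : forall lam : nat -> R, (forall k, 0 <= lam k) -> 0 < \sum_(k < n) lam k ->
     exists2 f, BFV f & eps * \sum_(k < n) lam k < \sum_(k < n) lam k * re (hk k f).
  move=> lam lam0 Lp; set L := \sum_(k < n) lam k.
  pose sc := flatten [seq scl (io (lam k / L)) (sval (List.nth k ss i0)) | k <- iota 0 n].
  have hsc : allU sc by apply: allU_flat => k; apply: allU_scl; exact: svalP.
  case: (Hyp1 sc hsc) => f hf Hf; exists f => //.
  pose x k := re (zf (sval (List.nth k ss i0)) f).
  have E1 : re (zf sc f) = \sum_(k < n) (lam k / L) * x k.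
    rewrite /sc zf_flat re_sum.
    have -> : iota 0 n = index_iota 0 n by rewrite /index_iota subn0.
    rewrite big_mkord.
    by apply: eq_bigr => k _; rewrite zf_scl reM.
  have E2 : \sum_(k < n) lam k * re (hk k f) = L * re (y f) - \sum_(k < n) lam k * x k.
    rewrite /L mulr_suml -sumrB; apply: eq_bigr => k _.
    by rewrite /hk reB /x; ring.
  have E3 : \sum_(k < n) (lam k / L) * x k = L^-1 * \sum_(k < n) lam k * x k.
    by rewrite mulr_sumr; apply: eq_bigr => k _; ring.
  move: Hf; rewrite reB E1 E3 E2 => Hf.
  have L0 : L != 0 by apply: lt0r_neq0.
  rewrite -(ltr_pM2l Lp) in Hf.
  move: Hf; rewrite mulrBr mulrA mulfV // mul1r.
  by rewrite mulrC.
case: (FIP hW Hyp2) => f hf Hf.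
case: (hss f hf) => i hi [_ [_ hphi]].
case: (List.In_nth ss i i0 hi) => k [/ssrnat.ltP hkn hki].
have := Hf k hkn; rewrite /hk hki.
move: hphi; rewrite /phi -opprB reN ltrN2 => h1 h2.
by have := lt_le_trans h1 h2; rewrite ltxx.
Qed.

Lemma dil_of w (z : (Omega -> K^o) -> K) t :
  (forall e' f, G e' -> rep e' f -> e' w = z f) ->
  (forall a f, FV f -> z (fun x => a *: f x) = a * z f) ->
  0 < t -> (forall f, BFV f -> `|z f| <= t) -> in_dil D t w.
Proof.
move=> hw hz t0 hb; exists (t^-1 *: w); split; last first.
  by rewrite scalerA mulfV ?scale1r //; apply: lt0r_neq0.
move=> e' he f hr c hn.
rewrite eZ; last exact: G_dual.
rewrite (hw e' f he hr) normrM normfV (gtr0_norm t0) ler_pdivrMl //.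
exact: (bnd_scale hz (ltW t0) hb hr.1 hn).
Qed.

Definition Pu y w := forall e' f, G e' -> rep e' f -> e' w = y f.

Lemma Pu_uniq y w w' : Pu y w -> Pu y w' -> w = w'.
Proof.
move=> h h'; apply/eqP; rewrite -subr_eq0; apply/eqP; apply: sep => e' he.
case: (hg he) => f [hf hr].
by rewrite eB ?(h e' f he (conj hf hr)) ?(h' e' f he (conj hf hr)) ?subrr //; exact: G_dual.
Qed.

Lemma exist_u y : FW' y -> exists w, Pu y w.
Proof.
move=> hy.
have H n : exists s, allU s /\ forall f, BFV f -> `|y f - zf s f| <= io (n.+1%:R^-1).
  by apply: density => //; rewrite invr_gt0 ltr0Sn.
case: (choice H) => sq Hsq.
pose x n := zE (sq n).
have hx n e' f : G e' -> rep e' f -> e' (x n) = zf (sq n) f.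
  by move=> he hr; apply: e_zE => //; case: (Hsq n).
have hzh n a f : FV f -> zf (sq n) (fun w => a *: f w) = a * zf (sq n) f.
  by move=> hf; apply: zf_hom => //; case: (Hsq n).
have hdy n a f : FV f -> (fun f => y f - zf (sq n) f) (fun w => a *: f w) = a * (y f - zf (sq n) f).
  by move=> hf /=; rewrite hzh // W_Z // ?mulrBr //; exact: FV_FW.
have Ex n : exists k : nat, in_dil D k%:R (x n).
  case: (Hsq n) => hs _; case: (zf_bnd hs) => M [M0' hM].
  exists (Num.Def.archi_bound (re M)).+1.
  apply: (dil_of (z := zf (sq n))); [exact: hx | exact: hzh | by rewrite ltr0Sn |].
  move=> f hf; apply: le_trans (hM f hf) _.
  rewrite -{1}(ioK M0') -(rmorph_nat io) leI ltW //.
  apply: lt_le_trans (archi_boundP (re_ge0 M0')) _.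
  by rewrite ler_nat.
have Cau : forall eps : K, 0 < eps -> exists N, forall n m, (N <= n)%N -> (N <= m)%N ->
    in_dil D eps (x n - x m).
  move=> eps eps0.
  have e0 : 0 < re eps by rewrite -ltI ioK ?rmorph0 // ltW.
  case: (invn_small (divr_gt0 e0 (ltr0Sn _ 1))) => N HN.
  exists N => n m hn hm.
  apply: (dil_of (z := fun f => zf (sq n) f - zf (sq m) f)) => //.
  - move=> e' f he hr; rewrite eB; last exact: G_dual.
    by rewrite (hx n e' f he hr) (hx m e' f he hr).
  - by move=> a f hf; rewrite !hzh // mulrBr.
  - move=> f hf.
    have -> : zf (sq n) f - zf (sq m) f = (y f - zf (sq m) f) - (y f - zf (sq n) f) by ring.
    apply: le_trans (ler_normB _ _) _.
    rewrite -(ioK (ltW eps0)) (splitr (re eps)) rmorphD.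
    apply: lerD; [apply: le_trans ((Hsq m).2 f hf) _ | apply: le_trans ((Hsq n).2 f hf) _];
      by rewrite leI; apply: HN.
case: (D_complete Ex Cau) => w [_ Hw].
exists w => e' f he hr.
have hd := G_dual he.
case: (FV_norm hr.1) => c0 hc0; have c00 := normV_ge0 hc0.
apply/eqP; rewrite -subr_eq0; apply/eqP.
apply: (@normK0 _ (c0 + c0)); first by rewrite addr_ge0.
move=> e e0.
have ie : 0 < io e by rewrite -(rmorph0 io) ltI.
case: (Hw (io e) ie) => N1 HN1.
case: (invn_small e0) => N2 HN2.
pose n := maxn N1 N2.
case: (HN1 n (leq_maxl _ _)) => d [hD hxd].
have h1 : `|e' (x n) - e' w| <= io e * c0.
  rewrite -eB // hxd eZ // normrM (gtr0_norm ie); apply: ler_wpM2l; [exact: ltW | exact: (hD e' he f hr c0 hc0)].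
have h2 : `|y f - e' (x n)| <= io e * c0.
  rewrite (hx n e' f he hr).
  apply: (bnd_scale (z := fun f => y f - zf (sq n) f) (t := io e));
    [exact: (hdy n) | exact: ltW | | exact: hr.1 | exact: hc0].
  move=> f' hf'; apply: le_trans ((Hsq n).2 f' hf') _.
  by rewrite leI; apply: HN2; apply: leq_maxr.
have -> : e' w - y f = - ((e' (x n) - e' w) + (y f - e' (x n))) by ring.
rewrite normrN mulrDr; apply: le_trans (ler_normD _ _) _; exact: lerD.
Qed.

Definition u (y : (Omega -> K^o) -> K) : V :=
  match pselect (FW' y) with
  | left h => sval (cid (exist_u h))
  | right _ => 0
  end.

Lemma u_spec y : FW' y -> Pu y (u y).
Proof. by rewrite /u; case: pselect => // h _; exact: svalP (cid (exist_u h)). Qed.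

Lemma u_bound y c a : FW' y -> (forall f, BFV f -> `|y f| <= c) ->
  forall Ca, (forall d, D d -> p a d <= Ca) -> p a (u y) <= Ca * c.
Proof.
move=> hy hb Ca hCa.
have c0 : 0 <= c by have := hb _ B0; rewrite (sd0 hlinK homW hy) normr0.
have Ca0 : 0 <= Ca by have := hCa 0 D0; rewrite p0.
apply: leK_lim; [exact: p_ge0 | exact: mulr_ge0 | exact: Ca0 | move=> e e0].
have ie : 0 < io e by rewrite -(rmorph0 io) ltI.
have ce : 0 < c + io e by apply: lt_le_trans ie _; rewrite lerDr.
have : in_dil D (c + io e) (u y).
  apply: (dil_of (z := y)) => //.
  - by move=> e' f he hr; apply: u_spec.
  - by move=> a' f hf; apply: W_Z => //; exact: FV_FW.
  - by move=> f hf; apply: le_trans (hb f hf) _; rewrite lerDl ltW.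
case=> d [hd ->].
case: hE => _ hs _ _ _; case: (hs a) => _ -> _.
rewrite (gtr0_norm ce) -mulrDr mulrC; apply: ler_wpM2r; [exact: ltW | exact: hCa].
Qed.

Lemma core_concl : exists u, [/\ epsE u,
      lc_bounded p (fun e => exists y, (FW' y /\ forall f, BFV f -> `|y f| <= 1) /\ e = u y) &
      forall m y, U m y -> TE m (Smap u) y = g m y].
Proof.
have heps : epsE u.
  split.
  - move=> y z hy hz hyz; apply: Pu_uniq (u_spec hy) _.
    move=> e' f he hr; rewrite (u_spec hz he hr) hyz //; exact: FV_FW hr.1.
  - move=> a y z hy hz; symmetry; apply: Pu_uniq (u_spec (W_comb a hy hz)).
    move=> e' f he hr /=; have hd := G_dual he.
    by rewrite eD // eZ // (u_spec hy he hr) (u_spec hz he hr).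
  - move=> a; case: (D_bounded a) => Ca hCa.
    exists BFV, Ca; split; [exact: hcomp | exact: B_absconv |].
    by move=> y hy c hb; apply: u_bound.
exists u; split => //.
- move=> a; case: (D_bounded a) => Ca hCa; exists (Ca * 1).
  by move=> e [y [[hy hb] ->]]; apply: u_bound.
- move=> m y hU; case: (hcons heps (hUom hU)) => _ hT ->.
  apply: Pu_uniq (u_spec hT) _ => e' f he hr.
  by rewrite hr.2.
Qed.

End Core.

Lemma core_stmt (R : realType) (K : numFieldType) (io : {rmorphism R -> K}) (re : K -> R)
  (reD : forall x y : K, re (x + y) = re x + re y)
  (reM : forall r x, re (io r * x) = r * re x)
  (reI : forall r, re (io r) = r)
  (normI : forall x : K, `|x| = io (re `|x|))
  (re_le : forall x : K, re x <= re `|x|)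
  (leI : forall a b, (io a <= io b) = (a <= b))
  (normIr : forall r, `|io r| = io `|r|) : thm3p19_stmt K.
Proof.
move=> V A p G Omega X MM emb omega M0 Mr domE TE domK TK nu JW LW MlW nuW U
  Mtop MlV0 nuV0 FV0 FVE FW0 FWE FW'0 normV0 BFV0 Bpolar epsE0
  hE hlc hG hGb hdisj homV hinj hOm hMt hnu0 hnup hJW hLW hMlW hMlWt hnuW0 hnuWp
  hlinE hlinK hdsV hdirE hdsW hstrong hcons hban hcomp hUom hUdual hUuniq g hg.
eapply core_concl; eassumption.
Qed.

Local Open Scope complex_scope.
Section Inst.
Variable R : realType.
Lemma c_reD (x y : R[i]) : complex.Re (x + y) = complex.Re x + complex.Re y.
Proof. exact: raddfD. Qed.
Lemma c_reM (r : R) (x : R[i]) : complex.Re (r%:C * x) = r * complex.Re x.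
Proof. case: x => a b. by simpc. Qed.
Lemma c_reI (r : R) : complex.Re (r%:C) = r. Proof. by []. Qed.
Lemma c_normI (x : R[i]) : `|x| = (complex.Re `|x|)%:C.
Proof. by rewrite normc_def. Qed.
Lemma c_re_le (x : R[i]) : complex.Re x <= complex.Re `|x|.
Proof. case: x => a b; rewrite normc_def /=.
 apply: le_trans (ler_norm a) _. rewrite -sqrtr_sqr ler_sqrt ?lerDl ?sqr_ge0 //.
 by rewrite addr_ge0 ?sqr_ge0. Qed.
Lemma c_leI (a b : R) : (a%:C <= b%:C) = (a <= b).
Proof. by rewrite lecE /= eqxx. Qed.
Lemma c_normIr (r : R) : `|r%:C| = `|r|%:C.
Proof. by rewrite normc_def /= expr0n /= addr0 sqrtr_sqr. Qed.
End Inst.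

Local Open Scope complex_scope.

Theorem theorem3p19 (R : realType) : thm3p19_stmt R /\ thm3p19_stmt R[i].
Proof.
split.
- apply: (@core_stmt R R idfun idfun) => //.
  by move=> x; rewrite /= ler_norm.
- apply: (@core_stmt R R[i] (real_complex R) (@complex.Re R)).
  + exact: c_reD.
  + exact: c_reM.
  + exact: c_reI.
  + exact: c_normI.
  + exact: c_re_le.
  + exact: c_leI.
  + exact: c_normIr.
Qed.
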